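(* Every locally Ramsey topological space is $\alpha_{3^-}$, and every $\alpha_{3^-}$ topological space is $\alpha_3$.
   Context: Convention: a ''sequence'' is a countably infinite set; a countably infinite set $A$ in a space $X$ converges to $x\in X$ if $x\notin A$ and every neighborhood of $x$ contains all but finitely many elements of $A$. $\lim_m x_{nm}=x$ means $x_{nm}\neq x$ for all $m$ and every neighborhood of $x$ contains $x_{nm}$ for all but finitely many $m$. A space $X$ is locally Ramsey if for each $x\in X$, whenever $\lim_m x_{nm}=x$ for all $n$, there is an infinite $I\subseteq\mathbb N$ such that $\{x_{nm}: n,m\in I,\ n<m\}$ converges to $x$. $X$ is $\alpha_{3^-}$ if for each $x\in X$, whenever $\lim_m x_{nm}=x$ for all $n$, there are infinite $I,J\subseteq\mathbb N$ such that $\{x_{nm}: n\in I,\ m\in J,\ n<m\}$ converges to $x$. $X$ is $\alpha_3$ if for each $x\in X$ and all pairwise disjoint sequences $S_1,S_2,\dots\subseteq X$ each converging to $x$, there is a sequence $S\subseteq\bigcup_nS_n$ converging to $x$ such that $S_n\cap S$ is infinite for infinitely many $n$. *)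

(* Defs.v *)
From HB Require Import structures.
From mathcomp Require Import all_boot all_order.
From mathcomp Require Import classical_sets cardinality topology.
Set Implicit Arguments. Unset Strict Implicit. Unset Printing Implicit Defensive.
Local Open Scope classical_set_scope.

Definition is_sequence {T : Type} (A : set T) : Prop :=
  countable A /\ infinite_set A.

Definition set_converges {T : topologicalType} (A : set T) (x : T) : Prop :=
  is_sequence A /\ ~ A x /\
  (forall U : set T, nbhs x U -> finite_set (A `\` U)).

Definition lim_to {T : topologicalType} (f : nat -> T) (x : T) : Prop :=
  (forall m, f m <> x) /\
  (forall U : set T, nbhs x U -> finite_set [set m | ~ U (f m)]).

Definition locally_Ramsey (T : topologicalType) : Prop :=
  forall (x : T) (u : nat -> nat -> T),
    (forall n, lim_to (u n) x) ->
    exists I : set nat, infinite_set I /\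
      set_converges [set y | exists n m, I n /\ I m /\ (n < m)%N /\ u n m = y] x.

Definition alpha3m (T : topologicalType) : Prop :=
  forall (x : T) (u : nat -> nat -> T),
    (forall n, lim_to (u n) x) ->
    exists I J : set nat, infinite_set I /\ infinite_set J /\
      set_converges [set y | exists n m, I n /\ J m /\ (n < m)%N /\ u n m = y] x.

Definition alpha3 (T : topologicalType) : Prop :=
  forall (x : T) (S : nat -> set T),
    (forall n, set_converges (S n) x) ->
    (forall n m, n <> m -> S n `&` S m = set0) ->
    exists S0 : set T, S0 `<=` \bigcup_n S n /\ set_converges S0 x /\
      infinite_set [set n | infinite_set (S0 `&` S n)].

(* Main.v *)
Require Import Defs.
From mathcomp Require Import all_boot classical_sets cardinality topology.
From mathcomp Require Import boolp functions.
Local Open Scope classical_set_scope.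

Lemma inf_inj (T : Type) (A : set T) : infinite_set A ->
  exists f : nat -> T, (forall n, A (f n)) /\ injective f.
Proof.
move=> /infiniteP /card_leP [f].
pose g : [set: nat] -> A := f.
pose h n : [set: nat] := SigSub (mem_set (I : setT n)).
exists (fun n => val (g (h n))).
split.
- move=> n; by case: (g _) => y /= /set_mem.
- move=> n m /val_inj H.
  have := @inj _ _ _ f (h n) (h m) (in_setT _) (in_setT _) H.
  by move=> /(congr1 val).
Qed.

Theorem corollary2p7 (T : topologicalType) :
  (locally_Ramsey T -> alpha3m T) /\ (alpha3m T -> alpha3 T).
Proof.
split.
  move=> LR x u hu; have [I [HI Hc]] := LR x u hu.
  by exists I, I.
move=> H3 x S HS _.
have [u Hu] := @choice nat (nat -> T) (fun n f => (forall m, S n (f m)) /\ injective f) (fun n => @inf_inj _ _ (proj2 (proj1 (HS n)))).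
have hu : forall n, lim_to (u n) x.
  move=> n; split.
    move=> m E; have [_ [nx _]] := HS n; apply: nx; rewrite -E; exact: (proj1 (Hu n)).
  move=> U NU; have [_ [_ Hf]] := HS n.
  apply: (sub_finite_set (B := (u n) @^-1` (S n `\` U))).
    by move=> m /= Hm; split => //; exact: (proj1 (Hu n)).
  apply: finite_preimage; last exact: Hf.
  by move=> a b _ _; apply: (proj2 (Hu n)).
have [I [J [HI [HJ Hc]]]] := H3 x u hu.
exists [set y | exists n m, I n /\ J m /\ (n < m)%N /\ u n m = y].
split; last split; [| exact: Hc |].
  move=> y [n [m [_ [_ [_ <-]]]]]; exists n => //; exact: (proj1 (Hu n)).
apply: (sub_infinite_set (A := I)) => // n In Hfin.
apply: HJ.
have F1 : finite_set [set m | J m /\ (n < m)%N].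
  apply: (sub_finite_set _ (finite_preimage _ Hfin)).
    move=> m [Jm nm] /=; split; last exact: (proj1 (Hu n)).
    by exists n, m.
  by move=> a b _ _; apply: (proj2 (Hu n)).
apply: (sub_finite_set (B := [set m | J m /\ (n < m)%N] `|` `I_n.+1)).
  move=> m Jm; case: (ltnP n m) => nm; [left | right] => //=.
by rewrite finite_setU; split => //; exact: finite_II.
Qed.
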